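(* Under the standing assumptions described in the context (including (H4)–(H8)), the predictor–corrector method is consistent: for every partition satisfying (H4) with step $h$, $$\max_{0\le n\le N}\frac{|\tau_{n+1}|}{h}\le \tfrac12H^2h+\tfrac12K_2H^3h^2,$$ and consequently $\max_{0\le n\le N}|\tau_{n+1}|/h\to0$ as $h\to0$ (along partitions satisfying (H4) with the same constants $H,K_2$).
   Context: Let $T>0$ and let $g:[0,T]\to[0,\infty)$ be increasing, left-continuous, continuous at $0$, with a finite set $D_g\subset(0,T)$ of discontinuity points; $\Delta^+\varphi(t)=\varphi(t^+)-\varphi(t)$; $g^B(t)=\sum_{s\in[0,t)}\Delta^+g(s)$, $g^C=g-g^B$; $\mu_g$ is the Lebesgue–Stieltjes measure with $\mu_g([c,d))=g(d)-g(c)$. For $u:[0,T]\to\mathbb R$ the Stieltjes derivative at $t$ is $u'_g(t)=\lim_{s\to t}\frac{u(s)-u(t)}{g(s)-g(t)}$ if $t\notin D_g$ and $u'_g(t)=\frac{u(t^+)-u(t)}{\Delta^+g(t)}$ if $t\in D_g$. Let $f:[0,T]\times\mathbb R\to\mathbb R$, $x_0\in\mathbb R$, and let $x$ be the solution of $x'_g(t)=f(t,x(t))$ for $\mu_g$-a.e. $t\in[0,T)$, $x(0)=x_0$; it satisfies $x(t)=x_0+\int_{[0,t)}f(s,x(s))\,\mathrm d\mu_g(s)$ for all $t\in[0,T]$. Put $f_*(x)(t)=f(t,x(t))$, $f_*^B(x)(t)=\sum_{s\in[0,t)}\Delta^+f_*(x)(s)$, $f_*^C(x)=f_*(x)-f_*^B(x)$.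 A function $u$ is $g$-Lipschitz with constant $H$ if $|u(t)-u(s)|\le H|g(t)-g(s)|$ for all $t,s$; $g$-continuous means: for every $t_0$ and $\epsilon>0$ there is $\delta>0$ with $|g(t)-g(t_0)|<\delta\Rightarrow|u(t)-u(t_0)|<\epsilon$. Hypotheses: (H4) $0=t_0<t_1<\dots<t_{N+1}=T$ with $t_{k+1}-t_k=h>0$ for all $k$, and $D_g\subset\{t_k\}$; $K_1=\max\{\Delta^+g(d):d\in D_g\}$. (H5) $f_*(x)$ is $g$-Lipschitz with constant $H>0$, and $f_*^C(x)$ and $g^C$ are Lipschitz with constant $H$. (H6) for every $c\in\mathbb R$, $f(\cdot,c)$ is bounded and $g$-continuous on $[0,T]$. (H7) for every $t$, $f(t,\cdot)\in C^1(\mathbb R)$ and $|\partial_x f(t,x)|<K_2$ for all $(t,x)$. (H8) for every $t\in[0,T)$ and $c$, the right limit $f(t^+,c)=\lim_{s\to t^+}f(s,c)$ exists, $f(t^+,\cdot)\in C^1(\mathbb R)$ and $|\partial_x f(t^+,x)|<K_3$ for all $(t,x)$. Notation: $x_k=x(t_k)$, $x_k^+=x(t_k^+)$. For $k=0,\dots,N$: $x^*_{k+1}=x_k^++f(t_k^+,x_k^+)(g(t_{k+1})-g(t_k^+))$ and $\tau_{k+1}=x_{k+1}-x_k^+-\tfrac12(f(t_k^+,x_k^+)+f(t_{k+1},x^*_{k+1}))(g(t_{k+1})-g(t_k^+))$. *)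

(* Defs.v *)
From Stdlib Require Import Reals Lra List.
Open Scope R_scope.

Definition increasing_on (T : R) (g : R -> R) : Prop :=
  forall s t, 0 <= s -> s <= t -> t <= T -> g s <= g t.

Definition cont_in (T : R) (u : R -> R) (t : R) : Prop :=
  forall eps, 0 < eps -> exists del, 0 < del /\
    forall s, 0 <= s <= T -> Rabs (s - t) < del -> Rabs (u s - u t) < eps.

Definition left_cont_at (u : R -> R) (t : R) : Prop :=
  forall eps, 0 < eps -> exists del, 0 < del /\
    forall s, 0 <= s <= t -> t - s < del -> Rabs (u s - u t) < eps.

Definition rlim (T : R) (u : R -> R) (t l : R) : Prop :=
  forall eps, 0 < eps -> exists del, 0 < del /\
    forall s, t < s <= T -> s - t < del -> Rabs (u s - l) < eps.

(* sum_{d in Dg, d < t} (up d - u d), i.e. sum of the jumps Delta^+ u over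
   the (finite) set Dg intersected with [0,t) *)
Definition jump_sum (Dg : list R) (u up : R -> R) (t : R) : R :=
  fold_right (fun d acc => (if Rlt_dec d t then up d - u d else 0) + acc) 0 Dg.

Definition g_Lipschitz (T : R) (g u : R -> R) (H : R) : Prop :=
  forall s t, 0 <= s <= T -> 0 <= t <= T -> Rabs (u t - u s) <= H * Rabs (g t - g s).

Definition Lipschitz_on (T : R) (u : R -> R) (H : R) : Prop :=
  forall s t, 0 <= s <= T -> 0 <= t <= T -> Rabs (u t - u s) <= H * Rabs (t - s).

Definition g_cont (T : R) (g u : R -> R) : Prop :=
  forall t0, 0 <= t0 <= T -> forall eps, 0 < eps -> exists del, 0 < del /\
    forall t, 0 <= t <= T -> Rabs (g t - g t0) < del -> Rabs (u t - u t0) < eps.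

(* E is mu_g-null: Lebesgue-Stieltjes outer measure (covers by [c,d) in [0,T]) is 0 *)
Definition g_null (T : R) (g : R -> R) (E : R -> Prop) : Prop :=
  forall eps, 0 < eps -> exists c d : nat -> R,
    (forall n, 0 <= c n /\ c n <= d n /\ d n <= T) /\
    (forall t, E t -> exists n, c n <= t /\ t < d n) /\
    (forall N, sum_f_R0 (fun n => g (d n) - g (c n)) N <= eps).

(* finite families of pairwise disjoint open subintervals (a_i,b_i) of [0,T],
   listed in increasing order *)
Fixpoint nonoverlap (T : R) (l : list (R * R)) : Prop :=
  match l with
  | nil => True
  | (a, b) :: l' =>
      0 <= a /\ a <= b /\ b <= T /\
      (match l' with nil => True | (a', _) :: _ => b <= a' end) /\
      nonoverlap T l'
  end.

Definition sum_list (l : list R) : R := fold_right Rplus 0 l.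

Definition g_abs_cont (T : R) (g u : R -> R) : Prop :=
  forall eps, 0 < eps -> exists del, 0 < del /\
    forall l, nonoverlap T l ->
      sum_list (map (fun p => g (snd p) - g (fst p)) l) < del ->
      sum_list (map (fun p => Rabs (u (snd p) - u (fst p))) l) < eps.

Definition g_deriv (T : R) (g : R -> R) (Dg : list R) (u : R -> R) (t L : R) : Prop :=
  (In t Dg -> exists gl ul, rlim T g t gl /\ rlim T u t ul /\ L = (ul - u t) / (gl - g t)) /\
  (~ In t Dg -> forall eps, 0 < eps -> exists del, 0 < del /\
     forall s, 0 <= s <= T -> 0 < Rabs (s - t) < del -> g s <> g t ->
       Rabs ((u s - u t) / (g s - g t) - L) < eps).

Definition C1_bounded (phi : R -> R) (K : R) : Prop :=
  exists dphi : R -> R, (forall y, derivable_pt_lim phi y (dphi y)) /\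
    continuity dphi /\ (forall y, Rabs (dphi y) < K).

(* predictor x*_{k+1} and local truncation error tau_{k+1}, with a = t_k, b = t_{k+1};
   xp = x(.^+), gp = g(.^+), fplus = f(.^+, .) *)
Definition xstar (g : R -> R) (xp gp : R -> R) (fplus : R -> R -> R) (a b : R) : R :=
  xp a + fplus a (xp a) * (g b - gp a).

Definition tau (x g : R -> R) (f : R -> R -> R) (xp gp : R -> R) (fplus : R -> R -> R)
  (a b : R) : R :=
  x b - xp a
  - / 2 * (fplus a (xp a) + f b (xstar g xp gp fplus a b)) * (g b - gp a).

(* Main.v *)
Require Import Defs.
From Stdlib Require Import Reals List.
From Stdlib Require Import Lra Lia Classical IndefiniteDescription.
Open Scope R_scope.

Lemma Rabs_bnd a b : Rabs a <= b -> -b <= a <= b.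
Proof. unfold Rabs; destruct (Rcase_abs a); intros; lra. Qed.
Lemma bnd_Rabs a b : -b <= a <= b -> Rabs a <= b.
Proof. unfold Rabs; destruct (Rcase_abs a); intros; lra. Qed.
Lemma Rabs_bnd_lt a b : Rabs a < b -> -b < a < b.
Proof. unfold Rabs; destruct (Rcase_abs a); intros; lra. Qed.
Lemma abs_self c : -Rabs c <= c <= Rabs c.
Proof. unfold Rabs; destruct (Rcase_abs c); lra. Qed.

Lemma le_eps (X Y K : R) : 0 <= K -> (forall e, 0 < e -> X <= Y + e * K) -> X <= Y.
Proof.
  intros HK H. destruct (Rle_dec X Y) as [|n]; auto.
  set (q := (X - Y) / (2 * (K + 1))).
  assert (Hq : q * (2 * (K + 1)) = X - Y) by (unfold q; field; lra).
  assert (Hp : 0 < q) by (unfold q; apply Rdiv_lt_0_compat; lra).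
  specialize (H q Hp). nra.
Qed.

Lemma C1_lip phi K : C1_bounded phi K -> forall y z, Rabs (phi y - phi z) <= K * Rabs (y - z).
Proof.
  intros [d [Hd [_ Hb]]] y z.
  destruct (Rtotal_order y z) as [Hlt|[Heq|Hgt]].
  - destruct (MVT_cor2 phi d y z Hlt (fun c _ => Hd c)) as [c [Hc _]].
    replace (phi y - phi z) with (- (phi z - phi y)) by ring.
    rewrite Rabs_Ropp, Hc, Rabs_mult.
    replace (Rabs (y - z)) with (Rabs (z - y)) by (rewrite <- Rabs_Ropp; f_equal; ring).
    specialize (Hb c). pose proof (Rabs_pos (z - y)). nra.
  - subst. rewrite !Rminus_diag, Rabs_R0. pose proof (Rabs_pos (d 0)). pose proof (Hb 0). nra.
  - destruct (MVT_cor2 phi d z y Hgt (fun c _ => Hd c)) as [c [Hc _]].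
    rewrite Hc, Rabs_mult.
    specialize (Hb c). pose proof (Rabs_pos (y - z)). nra.
Qed.

Lemma C1_pos phi K : C1_bounded phi K -> 0 < K.
Proof. intros [d [_ [_ Hb]]]. pose proof (Hb 0). pose proof (Rabs_pos (d 0)). lra. Qed.

Lemma AC_eq T g x z t : g_abs_cont T g x -> 0 <= z <= T -> 0 <= t <= T -> g z = g t -> x z = x t.
Proof.
  intros HAC Hz Ht Hg.
  assert (key : forall z t, 0 <= z <= t -> t <= T -> g z = g t -> x z = x t).
  { clear z t Hz Ht Hg. intros z t H1 H2 Hg.
    destruct (Req_dec (x z) (x t)) as [|Hn]; auto. exfalso.
    assert (Hp : 0 < Rabs (x t - x z)) by (apply Rabs_pos_lt; lra).
    destruct (HAC _ Hp) as [del [Hdel Hl]].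
    specialize (Hl ((z,t)::nil)). simpl in Hl.
    assert (Hn0 : nonoverlap T ((z,t)::nil)) by (simpl; repeat split; lra).
    specialize (Hl Hn0). rewrite Hg in Hl. lra. }
  destruct (Rle_dec z t).
  - apply key; lra.
  - symmetry; apply key; lra.
Qed.

Lemma deriv_bound T g x Ft t e : g_abs_cont T g x -> 0 <= t <= T -> 0 < e ->
  (exists del, 0 < del /\ forall z, 0 <= z <= T -> 0 < Rabs (z - t) < del -> g z <> g t ->
      Rabs ((x z - x t) / (g z - g t) - Ft) < e) ->
  exists del, 0 < del /\ forall z, 0 <= z <= T -> Rabs (z - t) < del ->
      Rabs (x z - x t - Ft * (g z - g t)) <= e * Rabs (g z - g t).
Proof.
  intros HAC Ht He [del [Hdel Hd]]. exists del; split; auto.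
  intros z Hz Hzt.
  destruct (Req_dec (g z) (g t)) as [Heq|Hne].
  - rewrite (AC_eq T g x z t HAC Hz Ht Heq), Heq.
    replace (x t - x t - Ft * (g t - g t)) with 0 by ring. rewrite Rabs_R0.
    pose proof (Rabs_pos (g t - g t)). nra.
  - assert (Hz0 : z <> t) by (intro; subst; auto).
    assert (Hq : g z - g t <> 0) by lra.
    assert (Hpos : 0 < Rabs (z - t)) by (apply Rabs_pos_lt; lra).
    specialize (Hd z Hz (conj Hpos Hzt) Hne).
    replace (x z - x t - Ft * (g z - g t)) with ((g z - g t) * ((x z - x t) / (g z - g t) - Ft)) by (field; auto).
    rewrite Rabs_mult. pose proof (Rabs_pos (g z - g t)). nra.
Qed.

Definition clampg (g : R -> R) (c d t : R) := g (Rmax c (Rmin t d)) - g c.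
Definition Psi (g : R -> R) (cc dd : nat -> R) (N : nat) (t : R) :=
  sum_f_R0 (fun n => clampg g (cc n) (dd n) t) N.

Lemma clamp_mono T g c d t t' : increasing_on T g -> 0 <= c <= d -> d <= T -> t <= t' ->
  clampg g c d t <= clampg g c d t'.
Proof.
  intros Hg Hc Hd Ht. unfold clampg.
  assert (g (Rmax c (Rmin t d)) <= g (Rmax c (Rmin t' d))); [|lra].
  apply Hg; unfold Rmax, Rmin; repeat destruct Rle_dec; lra.
Qed.

Lemma clamp_nonneg T g c d t : increasing_on T g -> 0 <= c <= d -> d <= T -> 0 <= clampg g c d t.
Proof.
  intros Hg Hc Hd. unfold clampg.
  assert (g c <= g (Rmax c (Rmin t d))); [|lra].
  apply Hg; unfold Rmax, Rmin; repeat destruct Rle_dec; lra.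
Qed.

Lemma clamp_le T g c d t : increasing_on T g -> 0 <= c <= d -> d <= T -> clampg g c d t <= g d - g c.
Proof.
  intros Hg Hc Hd. unfold clampg.
  assert (g (Rmax c (Rmin t d)) <= g d); [|lra].
  apply Hg; unfold Rmax, Rmin; repeat destruct Rle_dec; lra.
Qed.

Lemma clamp_in g c d u v : c < u <= v -> v < d -> clampg g c d v - clampg g c d u = g v - g u.
Proof.
  intros. unfold clampg.
  replace (Rmax c (Rmin v d)) with v by (unfold Rmax, Rmin; repeat destruct Rle_dec; lra).
  replace (Rmax c (Rmin u d)) with u by (unfold Rmax, Rmin; repeat destruct Rle_dec; lra).
  ring.
Qed.

Lemma Psi_diff g cc dd N u v : Psi g cc dd N v - Psi g cc dd N u =
  sum_f_R0 (fun n => clampg g (cc n) (dd n) v - clampg g (cc n) (dd n) u) N.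
Proof. unfold Psi. rewrite minus_sum. reflexivity. Qed.



Lemma Psi_diff_nonneg T g cc dd N u v : increasing_on T g -> (forall n, 0 <= cc n <= dd n /\ dd n <= T) ->
  u <= v -> 0 <= Psi g cc dd N v - Psi g cc dd N u.
Proof.
  intros Hg Hcd Huv. rewrite Psi_diff. apply cond_pos_sum. intro n.
  destruct (Hcd n). pose proof (clamp_mono T g (cc n) (dd n) u v Hg H H0 Huv). lra.
Qed.

Lemma Psi_diff_term T g cc dd N n u v : increasing_on T g -> (forall n, 0 <= cc n <= dd n /\ dd n <= T) ->
  u <= v -> (n <= N)%nat ->
  clampg g (cc n) (dd n) v - clampg g (cc n) (dd n) u <= Psi g cc dd N v - Psi g cc dd N u.
Proof.
  intros Hg Hcd Huv HnN. rewrite Psi_diff.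
  assert (Hnn : forall m, 0 <= clampg g (cc m) (dd m) v - clampg g (cc m) (dd m) u).
  { intro m. destruct (Hcd m). pose proof (clamp_mono T g (cc m) (dd m) u v Hg H H0 Huv). lra. }
  induction N as [|N IH].
  - assert (n = 0%nat) by lia. subst. simpl. lra.
  - simpl. destruct (Nat.eq_dec n (S N)) as [->|Hne].
    + pose proof (cond_pos_sum _ N Hnn). lra.
    + assert (n <= N)%nat by lia. specialize (IH H). pose proof (Hnn (S N)). lra.
Qed.

Lemma Psi_diff_monoN T g cc dd N N' u v : increasing_on T g -> (forall n, 0 <= cc n <= dd n /\ dd n <= T) ->
  u <= v -> (N <= N')%nat ->
  Psi g cc dd N v - Psi g cc dd N u <= Psi g cc dd N' v - Psi g cc dd N' u.
Proof.
  intros Hg Hcd Huv HN. rewrite !Psi_diff.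
  induction HN.
  - lra.
  - simpl. destruct (Hcd (S m)). pose proof (clamp_mono T g (cc (S m)) (dd (S m)) u v Hg H H0 Huv). lra.
Qed.

Lemma Psi_nonneg T g cc dd N t : increasing_on T g -> (forall n, 0 <= cc n <= dd n /\ dd n <= T) ->
  0 <= Psi g cc dd N t.
Proof.
  intros Hg Hcd. apply cond_pos_sum. intro n. destruct (Hcd n). eapply clamp_nonneg; eauto.
Qed.

Lemma Psi_le T g cc dd N t : increasing_on T g -> (forall n, 0 <= cc n <= dd n /\ dd n <= T) ->
  Psi g cc dd N t <= sum_f_R0 (fun n => g (dd n) - g (cc n)) N.
Proof.
  intros Hg Hcd. apply sum_Rle. intros n _. destruct (Hcd n). eapply clamp_le; eauto.
Qed.

Fixpoint sumL (l : list R) : R := match l with nil => 0 | a :: l' => a + sumL l' end.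

Lemma sum_list_app l1 l2 : sum_list (l1 ++ l2) = sum_list l1 + sum_list l2.
Proof. induction l1; simpl; [ring| rewrite IHl1; ring]. Qed.

Lemma nonoverlap_app T L u v : nonoverlap T L -> (forall p, In p L -> snd p <= u) -> 0 <= u -> u <= v -> v <= T ->
  nonoverlap T (L ++ (u, v) :: nil).
Proof.
  induction L as [|[a b] L IH]; intros HL Hsn Hu Huv Hv.
  - simpl. repeat split; lra.
  - simpl in HL. destruct HL as [H1 [H2 [H3 [H4 H5]]]].
    simpl. repeat split; try lra.
    + destruct L as [|[a' b'] L'].
      * simpl. pose proof (Hsn (a,b) (or_introl eq_refl)). simpl in H. lra.
      * simpl. exact H4.
    + apply IH; auto. intros p Hp. apply Hsn. right; auto.
Qed.

Definition Rinv_ (T : R) (g x : R -> R) (cc dd : nat -> R) (s c M e : R) (t : R) : Prop :=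
  exists L N, (forall p, In p L -> s <= fst p /\ snd p <= t) /\ nonoverlap T L /\
    sum_list (map (fun p => g (snd p) - g (fst p)) L) <= Psi g cc dd N t - Psi g cc dd N s /\
    Rabs (x t - x s - c * (g t - g s)) <= (M + e) * (g t - g s)
       + sum_list (map (fun p => Rabs (x (snd p) - x (fst p))) L)
       + Rabs c * sum_list (map (fun p => g (snd p) - g (fst p)) L).

Lemma creep_core T g x F (E : R -> Prop) s b' c M e cc dd :
  0 < e -> 0 <= s -> s <= b' -> b' <= T -> increasing_on T g ->
  (forall n, 0 <= cc n <= dd n /\ dd n <= T) ->
  (forall t, s <= t <= b' -> E t -> exists n, cc n < t < dd n) ->
  (forall t, s <= t <= b' -> ~ E t -> exists del, 0 < del /\ forall z, 0 <= z <= T ->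
      Rabs (z - t) < del -> Rabs (x z - x t - F t * (g z - g t)) <= e * Rabs (g z - g t)) ->
  (forall t, s <= t <= b' -> Rabs (F t - c) <= M) ->
  Rinv_ T g x cc dd s c M e b'.
Proof.
  intros He Hs Hsb Hb Hg Hcd Hcov Hder HFc.
  assert (HM : 0 <= M) by (pose proof (HFc s (conj (Rle_refl s) Hsb)); pose proof (Rabs_pos (F s - c)); lra).
  set (S := fun t => s <= t <= b' /\ Rinv_ T g x cc dd s c M e t).
  assert (HS0 : S s).
  { split; [lra|]. exists nil, 0%nat. simpl. repeat split; try (intros; contradiction); auto.
    - lra.
    - replace (x s - x s - c * (g s - g s)) with 0 by ring. rewrite Rabs_R0. lra. }
  assert (Hbd : bound S) by (exists b'; intros t [Ht _]; lra).
  destruct (completeness S Hbd (ex_intro _ s HS0)) as [ts [Hub Hlub]].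
  assert (Hts1 : s <= ts) by (apply Hub; auto).
  assert (Hts2 : ts <= b') by (apply Hlub; intros t [Ht _]; lra).
  assert (Hstep : exists del, 0 < del /\ forall u v, s <= u -> u <= ts -> ts <= v -> v <= b' ->
             ts - u < del -> v - ts < del -> Rinv_ T g x cc dd s c M e u -> Rinv_ T g x cc dd s c M e v).
  { destruct (classic (E ts)) as [HE|HnE].
    - destruct (Hcov ts (conj Hts1 Hts2) HE) as [n [Hn1 Hn2]].
      exists (Rmin (ts - cc n) (dd n - ts)). split; [apply Rmin_pos; lra|].
      intros u v Hu1 Hu2 Hv1 Hv2 Hdu Hdv [L [N [Hin [Hno [Hsg Hineq]]]]].
      assert (Hm1 := Rmin_l (ts - cc n) (dd n - ts)). assert (Hm2 := Rmin_r (ts - cc n) (dd n - ts)).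
      assert (Hguv : g u <= g v) by (apply Hg; lra).
      assert (Hgsu : g s <= g u) by (apply Hg; lra).
      exists (L ++ (u, v) :: nil), (Nat.max N n).
      split; [|split; [|split]].
      + intros p Hp. apply in_app_or in Hp. destruct Hp as [Hp|[Hp|[]]].
        * destruct (Hin p Hp); lra.
        * subst p. simpl. lra.
      + apply nonoverlap_app; auto; try lra. intros p Hp. destruct (Hin p Hp); lra.
      + rewrite map_app, sum_list_app. simpl.
        pose proof (Psi_diff_monoN T g cc dd N (Nat.max N n) s u Hg Hcd ltac:(lra) (Nat.le_max_l N n)).
        pose proof (Psi_diff_term T g cc dd (Nat.max N n) n u v Hg Hcd ltac:(lra) (Nat.le_max_r N n)).
        rewrite (clamp_in g (cc n) (dd n) u v) in H0 by lra. lra.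
      + rewrite !map_app, !sum_list_app. simpl.
        pose proof (Rabs_triang (x u - x s - c * (g u - g s)) (x v - x u - c * (g v - g u))).
        replace (x u - x s - c * (g u - g s) + (x v - x u - c * (g v - g u))) with (x v - x s - c * (g v - g s)) in H by ring.
        pose proof (Rabs_triang (x v - x u) (- (c * (g v - g u)))).
        rewrite Rabs_Ropp, Rabs_mult, (Rabs_pos_eq (g v - g u)) in H0 by lra.
        replace (x v - x u + - (c * (g v - g u))) with (x v - x u - c * (g v - g u)) in H0 by ring.
        pose proof (Rabs_pos c).
        assert ((M + e) * (g u - g s) <= (M + e) * (g v - g s)) by nra.
        lra.
    - destruct (Hder ts (conj Hts1 Hts2) HnE) as [del [Hdel Hd]].
      exists del. split; auto.
      intros u v Hu1 Hu2 Hv1 Hv2 Hdu Hdv [L [N [Hin [Hno [Hsg Hineq]]]]].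
      assert (Hguv : g u <= g v) by (apply Hg; lra).
      assert (Hgsu : g s <= g u) by (apply Hg; lra).
      assert (Hgut : g u <= g ts) by (apply Hg; lra).
      assert (Hgtv : g ts <= g v) by (apply Hg; lra).
      exists L, N. split; [|split; [|split]].
      + intros p Hp. destruct (Hin p Hp); lra.
      + auto.
      + pose proof (Psi_diff_nonneg T g cc dd N u v Hg Hcd ltac:(lra)). lra.
      + assert (H1 := Hd u ltac:(lra) ltac:(apply Rabs_def1; lra)).
        assert (H2 := Hd v ltac:(lra) ltac:(apply Rabs_def1; lra)).
        rewrite (Rabs_left1 (g u - g ts)) in H1 by lra.
        rewrite (Rabs_pos_eq (g v - g ts)) in H2 by lra.
        apply Rabs_bnd in H1. apply Rabs_bnd in H2. apply Rabs_bnd in Hineq.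
        pose proof (HFc ts (conj Hts1 Hts2)) as H3. apply Rabs_bnd in H3.
        assert (-(M * (g v - g u)) <= (F ts - c) * (g v - g u) <= M * (g v - g u)) by (split; nra).
        apply bnd_Rabs.
        replace (x v - x s - c * (g v - g s)) with
          ((x u - x s - c * (g u - g s)) + (x v - x ts - F ts * (g v - g ts))
            - (x u - x ts - F ts * (g u - g ts)) + (F ts - c) * (g v - g u)) by ring.
        split; nra. }
  destruct Hstep as [del [Hdel Hst]].
  assert (Hu : exists u, S u /\ ts - del < u).
  { destruct (classic (exists u, S u /\ ts - del < u)) as [|Hn]; auto.
    exfalso. assert (ts <= ts - del); [|lra].
    apply Hlub. intros u Su. destruct (Rle_dec u (ts - del)); auto.
    exfalso. apply Hn. exists u. split; auto; lra. }
  destruct Hu as [u [[Hu1 Ru] Hu2]].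
  assert (Hut : u <= ts) by (apply Hub; split; auto).
  set (v := Rmin (ts + del / 2) b').
  assert (Hv1 : ts <= v) by (unfold v, Rmin; destruct Rle_dec; lra).
  assert (Hv2 : v <= b') by (unfold v; apply Rmin_r).
  assert (Hv3 : v - ts < del) by (unfold v, Rmin; destruct Rle_dec; lra).
  assert (Rv : Rinv_ T g x cc dd s c M e v) by (apply (Hst u v); auto; lra).
  assert (Hvts : v <= ts) by (apply Hub; split; auto; lra).
  assert (v = b') by (unfold v in *; unfold Rmin in *; destruct Rle_dec; lra).
  rewrite <- H. exact Rv.
Qed.

Lemma geom N : sum_f_R0 (fun n => (/2)^(S n)) N = 1 - (/2)^(S N).
Proof.
  induction N as [|N IH].
  - simpl. field.
  - rewrite tech5, IH. simpl. field.
Qed.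

Lemma geom_le N : sum_f_R0 (fun n => (/2)^(S n)) N <= 1.
Proof. rewrite geom. pose proof (pow_lt (/2) (S N) ltac:(lra)). lra. Qed.

Lemma ML T g x F (E : R -> Prop) s b' c M :
  0 < s -> s <= b' -> b' <= T -> increasing_on T g -> (forall t, 0 < t <= T -> left_cont_at g t) ->
  g_abs_cont T g x -> g_null T g E ->
  (forall t, s <= t <= b' -> ~ E t -> forall eps, 0 < eps -> exists del, 0 < del /\
     forall z, 0 <= z <= T -> 0 < Rabs (z - t) < del -> g z <> g t ->
       Rabs ((x z - x t) / (g z - g t) - F t) < eps) ->
  (forall t, s <= t <= b' -> Rabs (F t - c) <= M) ->
  Rabs (x b' - x s - c * (g b' - g s)) <= M * (g b' - g s).
Proof.
  intros Hs Hsb Hb Hg Hlc HAC Hnull Hder HFc.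
  assert (Hgsb : g s <= g b') by (apply Hg; lra).
  apply le_eps with (K := (g b' - g s) + 1 + Rabs c).
  { pose proof (Rabs_pos c). lra. }
  intros e He.
  destruct (HAC e He) as [dA [HdA HAC']].
  set (eta := Rmin dA e / 2).
  assert (Heta1 : 0 < eta) by (unfold eta; pose proof (Rmin_pos dA e HdA He); lra).
  assert (Heta2 : eta < dA) by (unfold eta; pose proof (Rmin_l dA e); lra).
  assert (Heta3 : eta <= e) by (unfold eta; pose proof (Rmin_r dA e); pose proof (Rmin_pos dA e HdA He); lra).
  destruct (Hnull (eta / 2) ltac:(lra)) as [c0 [d0 [Hcd0 [Hcov0 Hsum0]]]].
  assert (Hsh : forall n, exists c', 0 <= c' <= c0 n /\ (0 < c0 n -> c' < c0 n) /\
                  g (c0 n) - g c' <= eta / 2 * (/2)^(S n)).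
  { intro n. destruct (Hcd0 n) as [H1 [H2 H3]].
    assert (Hw : 0 < eta / 2 * (/2)^(S n)) by (pose proof (pow_lt (/2) (S n) ltac:(lra)); nra).
    destruct (Rlt_dec 0 (c0 n)) as [Hp|Hnp].
    - destruct (Hlc (c0 n) ltac:(lra) _ Hw) as [del [Hdel Hd]].
      exists (Rmax 0 (c0 n - del / 2)).
      assert (Hm : 0 <= Rmax 0 (c0 n - del / 2) <= c0 n /\ Rmax 0 (c0 n - del / 2) < c0 n
                   /\ c0 n - Rmax 0 (c0 n - del / 2) < del)
        by (unfold Rmax; destruct Rle_dec; lra).
      split; [lra|split; [intros; lra|]].
      specialize (Hd (Rmax 0 (c0 n - del / 2)) ltac:(lra) ltac:(lra)).
      apply Rabs_bnd_lt in Hd. lra.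
    - exists (c0 n). split; [lra|split; [intros; lra|]]. lra. }
  set (cc := fun n => proj1_sig (constructive_indefinite_description _ (Hsh n))).
  assert (Hcc : forall n, 0 <= cc n <= c0 n /\ (0 < c0 n -> cc n < c0 n) /\
                  g (c0 n) - g (cc n) <= eta / 2 * (/2)^(S n)).
  { intro n. unfold cc. destruct (constructive_indefinite_description _ (Hsh n)) as [c' Hc']. simpl. exact Hc'. }
  assert (Hcd : forall n, 0 <= cc n <= d0 n /\ d0 n <= T).
  { intro n. destruct (Hcc n) as [H1 _]. destruct (Hcd0 n). lra. }
  destruct (creep_core T g x F E s b' c M e cc d0 He ltac:(lra) Hsb Hb Hg Hcd) as [L [N [Hin [Hno [Hsg Hineq]]]]].
  - intros t Ht HE. destruct (Hcov0 t HE) as [n [Hn1 Hn2]]. exists n. split; [|lra].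
    destruct (Hcc n) as [H1 [H2 _]].
    destruct (Rlt_dec (c0 n) t); [lra|].
    assert (c0 n = t) by lra. subst t. apply H2. lra.
  - intros t Ht HnE. apply deriv_bound; [exact HAC | lra | exact He | apply Hder; auto].
  - exact HFc.
  - assert (HsG : sum_list (map (fun p => g (snd p) - g (fst p)) L) <= eta).
    { pose proof (Psi_nonneg T g cc d0 N s Hg Hcd).
      pose proof (Psi_le T g cc d0 N b' Hg Hcd).
      assert (sum_f_R0 (fun n => g (d0 n) - g (cc n)) N <=
              sum_f_R0 (fun n => (g (d0 n) - g (c0 n)) + (/2)^(S n) * (eta / 2)) N).
      { apply sum_Rle. intros n _. destruct (Hcc n) as [_ [_ H3]]. lra. }
      rewrite plus_sum, <- scal_sum in H1.
      pose proof (Hsum0 N). pose proof (geom_le N).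
      assert (eta / 2 * sum_f_R0 (fun n => (/ 2) ^ S n) N <= eta / 2) by nra.
      lra. }
    pose proof (HAC' L Hno ltac:(lra)) as HX.
    pose proof (Rabs_pos c).
    assert (Rabs c * sum_list (map (fun p => g (snd p) - g (fst p)) L) <= Rabs c * e) by nra.
    lra.
Qed.

Lemma js_const Dg u up a b t t' : (forall d, In d Dg -> ~ (a < d < b)) -> a < t <= b -> a < t' <= b ->
  jump_sum Dg u up t = jump_sum Dg u up t'.
Proof.
  intros Hd Ht Ht'. induction Dg as [|d Dg IH]; simpl; auto.
  rewrite IH by (intros; apply Hd; right; auto).
  assert (Hd0 := Hd d (or_introl eq_refl)).
  destruct (Rlt_dec d t); destruct (Rlt_dec d t'); auto; exfalso; apply Hd0; lra.
Qed.

Lemma mul_lt_half K2 w e : 0 < K2 -> 0 < e -> Rabs w < e / (2 * K2) -> K2 * Rabs w < e / 2.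
Proof.
  intros HK He Hw. apply Rmult_lt_compat_l with (r := K2) in Hw; auto.
  replace (K2 * (e / (2 * K2))) with (e / 2) in Hw by (field; lra). exact Hw.
Qed.

Lemma L1 T a b f fplus x xp H K2 :
  0 <= a -> a < b -> b <= T -> rlim T x a (xp a) ->
  (forall t c, 0 <= t < T -> rlim T (fun s => f s c) t (fplus t c)) ->
  (forall t, 0 <= t <= T -> C1_bounded (f t) K2) ->
  (forall t t', a < t <= b -> a < t' <= b -> Rabs (f t' (x t') - f t (x t)) <= H * Rabs (t' - t)) ->
  0 < H ->
  forall t, a < t <= b -> Rabs (f t (x t) - fplus a (xp a)) <= H * (t - a).
Proof.
  intros Ha Hab Hb Hx Hfp HC1 HL HH t Ht.
  assert (HK : 0 < K2) by (apply (C1_pos (f a)); apply HC1; lra).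
  apply le_eps with (K := 1); [lra|]. intros e He.
  destruct (Hx (e / (2 * K2)) ltac:(apply Rdiv_lt_0_compat; lra)) as [d1 [Hd1 Hx1]].
  destruct (Hfp a (xp a) ltac:(lra) (e / 2) ltac:(lra)) as [d2 [Hd2 Hf2]].
  set (s := a + Rmin (Rmin d1 d2) (t - a) / 2).
  assert (Hm := Rmin_pos (Rmin d1 d2) (t - a) (Rmin_pos d1 d2 Hd1 Hd2) ltac:(lra)).
  assert (Hm1 := Rmin_l (Rmin d1 d2) (t - a)). assert (Hm2 := Rmin_r (Rmin d1 d2) (t - a)).
  assert (Hm3 := Rmin_l d1 d2). assert (Hm4 := Rmin_r d1 d2).
  assert (Hs1 : a < s <= t) by (unfold s; lra).
  assert (Hs2 : s - a < d1) by (unfold s; lra).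
  assert (Hs3 : s - a < d2) by (unfold s; lra).
  specialize (Hx1 s ltac:(lra) Hs2). specialize (Hf2 s ltac:(lra) Hs3). simpl in Hf2.
  pose proof (C1_lip _ _ (HC1 s ltac:(lra)) (x s) (xp a)) as Hl.
  pose proof (mul_lt_half K2 _ e HK He Hx1).
  pose proof (HL s t ltac:(lra) ltac:(lra)) as HL1.
  rewrite (Rabs_pos_eq (t - s)) in HL1 by lra.
  apply Rabs_bnd in Hl. apply Rabs_bnd_lt in Hf2. apply Rabs_bnd in HL1.
  apply bnd_Rabs. split; nra.
Qed.

Lemma L2 T a b g gp H :
  0 <= a -> a < b -> b <= T -> increasing_on T g -> rlim T g a (gp a) ->
  (forall t t', a < t <= b -> a < t' <= b -> Rabs (g t' - g t) <= H * Rabs (t' - t)) -> 0 < H ->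
  0 <= g b - gp a <= H * (b - a).
Proof.
  intros Ha Hab Hb Hg Hgp HL HH.
  assert (Hs : forall e, 0 < e -> exists s, a < s <= b /\ Rabs (g s - gp a) < e).
  { intros e He. destruct (Hgp e He) as [d [Hd Hd']].
    exists (a + Rmin d (b - a) / 2).
    assert (Hm := Rmin_pos d (b - a) Hd ltac:(lra)).
    assert (Hm1 := Rmin_l d (b - a)). assert (Hm2 := Rmin_r d (b - a)).
    split; [lra|]. apply Hd'; lra. }
  split.
  - cut (gp a <= g b); [lra|]. apply le_eps with (K := 1); [lra|]. intros e He.
    destruct (Hs e He) as [s [Hs1 Hs2]]. apply Rabs_bnd_lt in Hs2.
    assert (g s <= g b) by (apply Hg; lra). lra.
  - apply le_eps with (K := 1); [lra|]. intros e He.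
    destruct (Hs e He) as [s [Hs1 Hs2]]. apply Rabs_bnd_lt in Hs2.
    pose proof (HL s b ltac:(lra) ltac:(lra)) as H1.
    rewrite (Rabs_pos_eq (b - s)) in H1 by lra. apply Rabs_bnd in H1.
    assert (H * (b - s) <= H * (b - a)) by nra.
    lra.
Qed.

Lemma abs_mul_le c w e : Rabs w <= e -> Rabs (c * w) <= Rabs c * e.
Proof. intros. rewrite Rabs_mult. apply Rmult_le_compat_l; auto. apply Rabs_pos. Qed.

Lemma ML_lim T g x F (E : R -> Prop) a b xp gp c M :
  0 <= a -> a < b -> b <= T -> increasing_on T g -> (forall t, 0 < t <= T -> left_cont_at g t) ->
  g_abs_cont T g x -> g_null T g E ->
  (forall t, a < t < b -> ~ E t -> forall eps, 0 < eps -> exists del, 0 < del /\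
     forall z, 0 <= z <= T -> 0 < Rabs (z - t) < del -> g z <> g t ->
       Rabs ((x z - x t) / (g z - g t) - F t) < eps) ->
  rlim T x a (xp a) -> rlim T g a (gp a) ->
  (forall t, a < t < b -> Rabs (F t - c) <= M) ->
  Rabs (x b - xp a - c * (g b - gp a)) <= M * (g b - gp a).
Proof.
  intros Ha Hab Hb Hg Hlc HAC Hnull Hder Hx Hgp HFc.
  assert (HM : 0 <= M) by (pose proof (HFc ((a+b)/2) ltac:(lra)); pose proof (Rabs_pos (F ((a + b) / 2) - c)); lra).
  apply le_eps with (K := 2 + 2 * Rabs c + M); [pose proof (Rabs_pos c); lra|].
  intros e He.
  destruct (HAC e He) as [dA [HdA HAC']].
  destruct (Hlc b ltac:(lra) (Rmin dA e) (Rmin_pos _ _ HdA He)) as [del [Hdel Hd]].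
  set (b' := b - Rmin del (b - a) / 2).
  assert (Hm := Rmin_pos del (b - a) Hdel ltac:(lra)).
  assert (Hm1 := Rmin_l del (b - a)). assert (Hm2 := Rmin_r del (b - a)).
  assert (Hb'1 : a < b' < b) by (unfold b'; lra).
  assert (Hb'2 : b - b' < del) by (unfold b'; lra).
  specialize (Hd b' ltac:(lra) Hb'2). apply Rabs_bnd_lt in Hd.
  assert (HdA1 := Rmin_l dA e). assert (HdA2 := Rmin_r dA e).
  assert (Hgb' : g b' <= g b) by (apply Hg; lra).
  assert (Hxb : Rabs (x b - x b') < e).
  { specialize (HAC' ((b', b) :: nil)). simpl in HAC'.
    assert (nonoverlap T ((b', b) :: nil)) by (simpl; repeat split; lra).
    specialize (HAC' H ltac:(lra)). lra. }
  destruct (Hx e He) as [d1 [Hd1 Hx1]].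
  destruct (Hgp e He) as [d2 [Hd2 Hg2]].
  set (s := a + Rmin (Rmin d1 d2) (b' - a) / 2).
  assert (Hn := Rmin_pos (Rmin d1 d2) (b' - a) (Rmin_pos d1 d2 Hd1 Hd2) ltac:(lra)).
  assert (Hn1 := Rmin_l (Rmin d1 d2) (b' - a)). assert (Hn2 := Rmin_r (Rmin d1 d2) (b' - a)).
  assert (Hn3 := Rmin_l d1 d2). assert (Hn4 := Rmin_r d1 d2).
  assert (Hs1 : a < s < b') by (unfold s; lra).
  specialize (Hx1 s ltac:(lra) ltac:(unfold s; lra)).
  specialize (Hg2 s ltac:(lra) ltac:(unfold s; lra)).
  assert (HML := ML T g x F E s b' c M ltac:(lra) ltac:(lra) ltac:(lra) Hg Hlc HAC Hnull
                  ltac:(intros t Ht; apply Hder; lra) ltac:(intros t Ht; apply HFc; lra)).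
  pose proof (abs_mul_le c (g b - g b') e ltac:(apply bnd_Rabs; lra)) as Hc1.
  pose proof (abs_mul_le c (g s - gp a) e ltac:(apply Rabs_bnd_lt in Hg2; apply bnd_Rabs; lra)) as Hc2.
  apply Rabs_bnd in HML. apply Rabs_bnd in Hc1. apply Rabs_bnd in Hc2.
  apply Rabs_bnd_lt in Hxb. apply Rabs_bnd_lt in Hx1. apply Rabs_bnd_lt in Hg2.
  assert (M * (g b' - g s) <= M * (g b - gp a) + e * M) by nra.
  apply bnd_Rabs.
  replace (x b - xp a - c * (g b - gp a)) with
    ((x b' - x s - c * (g b' - g s)) + (x b - x b') + (x s - xp a) - c * (g b - g b') - c * (g s - gp a)) by ring.
  split; nra.
Qed.

Lemma local_bound (T : R) (g : R -> R) (Dg : list R) (f fplus : R -> R -> R) (x : R -> R)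
  (xp gp Fp : R -> R) (H K2 : R) (a h : R) :
  increasing_on T g ->
  (forall t, 0 < t <= T -> left_cont_at g t) ->
  g_abs_cont T g x ->
  (exists E : R -> Prop, g_null T g E /\
     forall t, 0 <= t < T -> ~ E t -> g_deriv T g Dg x t (f t (x t))) ->
  (forall t, 0 <= t < T -> rlim T x t (xp t)) ->
  (forall t, 0 <= t < T -> rlim T g t (gp t)) ->
  0 < H ->
  Lipschitz_on T (fun t => f t (x t) - jump_sum Dg (fun s => f s (x s)) Fp t) H ->
  Lipschitz_on T (fun t => g t - jump_sum Dg g gp t) H ->
  (forall t, 0 <= t <= T -> C1_bounded (f t) K2) ->
  (forall t c, 0 <= t < T -> rlim T (fun s => f s c) t (fplus t c)) ->
  0 <= a -> 0 < h -> a + h <= T ->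
  (forall d, In d Dg -> ~ (a < d < a + h)) ->
  Rabs (tau x g f xp gp fplus a (a + h)) <= / 2 * H ^ 2 * h ^ 2 + / 2 * K2 * H ^ 3 * h ^ 3.
Proof.
  intros Hg Hlc HAC [E [Hnull HdE]] Hx Hgp HH HLF HLg HC1 Hfp Ha Hh Hb Hnd.
  set (b := a + h) in *. assert (Hbdef : b = a + h) by reflexivity.
  assert (HK : 0 < K2) by (apply (C1_pos (f a)); apply HC1; lra).
  assert (LipF : forall t t', a < t <= b -> a < t' <= b -> Rabs (f t' (x t') - f t (x t)) <= H * Rabs (t' - t)).
  { intros t t' Ht Ht'. pose proof (HLF t t' ltac:(lra) ltac:(lra)) as L. simpl in L.
    rewrite (js_const Dg (fun s => f s (x s)) Fp a b t' t Hnd Ht' Ht) in L.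
    replace (f t' (x t') - jump_sum Dg (fun s => f s (x s)) Fp t - (f t (x t) - jump_sum Dg (fun s => f s (x s)) Fp t))
      with (f t' (x t') - f t (x t)) in L by ring. exact L. }
  assert (Lipg : forall t t', a < t <= b -> a < t' <= b -> Rabs (g t' - g t) <= H * Rabs (t' - t)).
  { intros t t' Ht Ht'. pose proof (HLg t t' ltac:(lra) ltac:(lra)) as L. simpl in L.
    rewrite (js_const Dg g gp a b t' t Hnd Ht' Ht) in L.
    replace (g t' - jump_sum Dg g gp t - (g t - jump_sum Dg g gp t)) with (g t' - g t) in L by ring. exact L. }
  assert (Hder : forall t, a < t < b -> ~ E t -> forall eps, 0 < eps -> exists del, 0 < del /\
     forall z, 0 <= z <= T -> 0 < Rabs (z - t) < del -> g z <> g t ->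
       Rabs ((x z - x t) / (g z - g t) - f t (x t)) < eps).
  { intros t Ht HnE. destruct (HdE t ltac:(lra) HnE) as [_ H2]. apply H2.
    intro Hin. apply (Hnd t Hin). lra. }
  set (P := fplus a (xp a)).
  assert (HP := L1 T a b f fplus x xp H K2 Ha ltac:(lra) Hb (Hx a ltac:(lra)) Hfp HC1 LipF HH).
  assert (HD := L2 T a b g gp H Ha ltac:(lra) Hb Hg (Hgp a ltac:(lra)) Lipg HH).
  fold P in HP.
  replace (b - a) with h in HD by (unfold b; ring).
  set (D := g b - gp a) in *.
  assert (M1 := ML_lim T g x (fun t => f t (x t)) E a b xp gp P (H * h) Ha ltac:(lra) Hb Hg Hlc HAC Hnull Hder
                  (Hx a ltac:(lra)) (Hgp a ltac:(lra))
                  ltac:(intros t Ht; eapply Rle_trans; [apply HP; lra| apply Rmult_le_compat_l; unfold b in *; lra])).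
  set (Fb := f b (x b)).
  assert (HB2 : forall t, a < t < b -> Rabs (f t (x t) - / 2 * (P + Fb)) <= / 2 * H * h).
  { intros t Ht.
    pose proof (HP t ltac:(lra)) as Q1. pose proof (LipF t b ltac:(lra) ltac:(lra)) as Q2.
    rewrite (Rabs_pos_eq (b - t)) in Q2 by lra. fold Fb in Q2.
    assert (Hs : H * (t - a) + H * (b - t) = H * h) by (rewrite Hbdef; ring).
    apply Rabs_bnd in Q1; apply Rabs_bnd in Q2; apply bnd_Rabs. split; lra. }
  assert (M2 := ML_lim T g x (fun t => f t (x t)) E a b xp gp (/2 * (P + Fb)) (/2 * H * h) Ha ltac:(lra) Hb Hg Hlc HAC Hnull Hder
                  (Hx a ltac:(lra)) (Hgp a ltac:(lra)) HB2).
  fold D in M1, M2.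
  set (xs := xstar g xp gp fplus a b).
  assert (Hxs : xs = xp a + P * D) by reflexivity.
  assert (Hlip := C1_lip _ _ (HC1 b ltac:(lra)) (x b) xs).
  unfold tau. fold xs. fold P. fold D.
  replace (x b - xp a - / 2 * (P + f b xs) * D) with
     ((x b - xp a - / 2 * (P + Fb) * D) + / 2 * (Fb - f b xs) * D) by (unfold Fb; ring).
  replace (x b - xs) with (x b - xp a - P * D) in Hlip by (rewrite Hxs; ring).
  fold Fb in Hlip.
  assert (W : Rabs (Fb - f b xs) <= K2 * (H * h * D)).
  { eapply Rle_trans; [exact Hlip|]. apply Rmult_le_compat_l; lra. }
  apply Rabs_bnd in M2. apply Rabs_bnd in W.
  assert (W2 : - (K2 * (H * h * D) * D) <= (Fb - f b xs) * D <= K2 * (H * h * D) * D) by (split; nra).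
  replace (/ 2 * H * h * D) with (/2 * (H * h * D)) in M2 by ring.
  assert (HhD : H * h * D <= H ^ 2 * h ^ 2) by (simpl; nra).
  assert (HhD2 : K2 * (H * h * D) * D <= K2 * H ^ 3 * h ^ 3).
  { assert (0 <= H * h * D) by nra. assert (D * D <= (H * h) * (H * h)) by nra.
    assert (H * h * D * D <= H * h * ((H * h) * (H * h))) by nra.
    simpl. nra. }
  apply bnd_Rabs. split; lra.
Qed.

Theorem mainTheorem9
  (T : R) (g : R -> R) (Dg : list R) (f fplus : R -> R -> R) (x0 : R) (x : R -> R)
  (xp gp Fp : R -> R) (H K2 K3 : R) :
  (* standing assumptions on g *)
  0 < T ->
  (forall t, 0 <= t <= T -> 0 <= g t) ->
  increasing_on T g ->
  (forall t, 0 < t <= T -> left_cont_at g t) ->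
  cont_in T g 0 ->
  NoDup Dg ->
  (forall d, In d Dg -> 0 < d < T) ->
  (forall t, 0 <= t <= T -> (In t Dg <-> ~ cont_in T g t)) ->
  (* x is the solution: x(0) = x0, x g-absolutely continuous, x'_g = f(t,x) mu_g-a.e. on [0,T) *)
  x 0 = x0 ->
  g_abs_cont T g x ->
  (exists E : R -> Prop, g_null T g E /\
     forall t, 0 <= t < T -> ~ E t -> g_deriv T g Dg x t (f t (x t))) ->
  (* names for right limits: xp t = x(t^+), gp t = g(t^+), Fp t = f_*(x)(t^+) *)
  (forall t, 0 <= t < T -> rlim T x t (xp t)) ->
  (forall t, 0 <= t < T -> rlim T g t (gp t)) ->
  (forall t, 0 <= t < T -> rlim T (fun s => f s (x s)) t (Fp t)) ->
  (* (H5) *)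
  0 < H ->
  g_Lipschitz T g (fun s => f s (x s)) H ->
  Lipschitz_on T (fun t => f t (x t) - jump_sum Dg (fun s => f s (x s)) Fp t) H ->
  Lipschitz_on T (fun t => g t - jump_sum Dg g gp t) H ->
  (* (H6) *)
  (forall c, (exists M, forall t, 0 <= t <= T -> Rabs (f t c) <= M) /\
             g_cont T g (fun t => f t c)) ->
  (* (H7) *)
  (forall t, 0 <= t <= T -> C1_bounded (f t) K2) ->
  (* (H8) *)
  (forall t c, 0 <= t < T -> rlim T (fun s => f s c) t (fplus t c)) ->
  (forall t, 0 <= t < T -> C1_bounded (fplus t) K3) ->
  (* conclusion: partitions t_k = k h, h = T/(N+1), with D_g among the nodes (H4) *)
  (forall N : nat,
     let h := T / INR (S N) in
     (forall d, In d Dg -> exists k : nat, (k <= S N)%nat /\ d = INR k * h) ->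
     forall n : nat, (n <= N)%nat ->
       Rabs (tau x g f xp gp fplus (INR n * h) (INR (S n) * h)) / h
         <= / 2 * H ^ 2 * h + / 2 * K2 * H ^ 3 * h ^ 2)
  /\
  (forall eps, 0 < eps -> exists del, 0 < del /\
     forall N : nat,
       let h := T / INR (S N) in
       h < del ->
       (forall d, In d Dg -> exists k : nat, (k <= S N)%nat /\ d = INR k * h) ->
       forall n : nat, (n <= N)%nat ->
         Rabs (tau x g f xp gp fplus (INR n * h) (INR (S n) * h)) / h < eps).
Proof.
  intros HT Hg0 Hg Hlc Hc0 HND HDg Hcont Hx0 HAC Hae Hx Hgp HFp HH HLF HLFc HLg H6 HC1 Hfp HC3.
  assert (HK : 0 < K2) by (apply (C1_pos (f 0)); apply HC1; lra).
  assert (P1 : forall N : nat,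
     let h := T / INR (S N) in
     (forall d, In d Dg -> exists k : nat, (k <= S N)%nat /\ d = INR k * h) ->
     forall n : nat, (n <= N)%nat ->
       Rabs (tau x g f xp gp fplus (INR n * h) (INR (S n) * h)) / h
         <= / 2 * H ^ 2 * h + / 2 * K2 * H ^ 3 * h ^ 2).
  { intros N h Hnodes n Hn.
    assert (HSN : 0 < INR (S N)) by (apply lt_0_INR; lia).
    assert (Hh : 0 < h) by (unfold h; apply Rdiv_lt_0_compat; lra).
    assert (HTh : INR (S N) * h = T) by (unfold h; field; lra).
    assert (Hn0 : 0 <= INR n) by apply pos_INR.
    assert (HnN : INR (S n) <= INR (S N)) by (apply le_INR; lia).
    rewrite S_INR in HnN.
    replace (INR (S n) * h) with (INR n * h + h) by (rewrite S_INR; ring).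
    assert (Hloc := local_bound T g Dg f fplus x xp gp Fp H K2 (INR n * h) h Hg Hlc HAC Hae Hx Hgp HH HLFc HLg HC1 Hfp
                      ltac:(nra) Hh ltac:(nra)).
    assert (Hb : Rabs (tau x g f xp gp fplus (INR n * h) (INR n * h + h)) <=
                 / 2 * H ^ 2 * h ^ 2 + / 2 * K2 * H ^ 3 * h ^ 3).
    { apply Hloc. intros d Hd [Hd1 Hd2].
      destruct (Hnodes d Hd) as [k [Hk Hdk]]. subst d.
      assert (INR n < INR k) by (apply Rmult_lt_reg_r with h; lra).
      assert (INR k < INR (S n)) by (rewrite S_INR; apply Rmult_lt_reg_r with h; lra).
      apply INR_lt in H0. apply INR_lt in H1. lia. }
    unfold Rdiv. apply Rle_trans with ((/ 2 * H ^ 2 * h ^ 2 + / 2 * K2 * H ^ 3 * h ^ 3) * / h).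
    - apply Rmult_le_compat_r; [left; apply Rinv_0_lt_compat; lra| exact Hb].
    - right. field. lra. }
  split; [exact P1|].
  intros eps Heps.
  set (Q := H ^ 2 + K2 * H ^ 3).
  assert (HQ : 0 < Q) by (unfold Q; pose proof (pow_lt H 2 HH); pose proof (pow_lt H 3 HH); nra).
  exists (Rmin 1 (eps / (Q + 1))).
  split; [apply Rmin_pos; [lra| apply Rdiv_lt_0_compat; lra]|].
  intros N h Hhd Hnodes n Hn.
  assert (HSN : 0 < INR (S N)) by (apply lt_0_INR; lia).
  assert (Hh : 0 < h) by (unfold h; apply Rdiv_lt_0_compat; lra).
  pose proof (P1 N Hnodes n Hn) as B. fold h in B.
  assert (Hm1 := Rmin_l 1 (eps / (Q + 1))). assert (Hm2 := Rmin_r 1 (eps / (Q + 1))).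
  assert (Hqe : (Q + 1) * (eps / (Q + 1)) = eps) by (field; lra).
  assert (Hh2 : h ^ 2 <= h) by (simpl; nra).
  assert (HK3 : 0 < K2 * H ^ 3) by (pose proof (pow_lt H 3 HH); nra).
  assert (/ 2 * H ^ 2 * h + / 2 * K2 * H ^ 3 * h ^ 2 <= Q * h) by (unfold Q; pose proof (pow_lt H 2 HH); nra).
  assert (Q * h < (Q + 1) * (eps / (Q + 1))) by nra.
  lra.
Qed.
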